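(* Let $X,Z\in\mathbb{R}^{n\times r}$ with $XX^{T}\ne ZZ^{T}$, and let $r^{\star}=\mathrm{rank}(Z)$ with $1\le r^{\star}\le r$. Let $Z_{\perp}=(I-XX^{\dagger})Z$, $$\alpha=\frac{\|Z_{\perp}Z_{\perp}^{T}\|_{F}}{\|XX^{T}-ZZ^{T}\|_{F}},\qquad\beta=\frac{\sigma_{\min}^{2}(X)}{\|XX^{T}-ZZ^{T}\|_{F}}\cdot\frac{\mathrm{tr}(Z_{\perp}Z_{\perp}^{T})}{\|Z_{\perp}Z_{\perp}^{T}\|_{F}}.$$ Then: (1) if $\beta\le\alpha$, then $\alpha^{2}+(r/r^{\star})\beta^{2}\le1$; (2) if $\beta\ge\alpha$, then $\alpha\le1/\sqrt{1+r/r^{\star}}$.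
   Context: $A^{\dagger}$ is the Moore–Penrose pseudoinverse and $\sigma_{\min}(X)$ the $r$-th singular value of $X$. When $Z_{\perp}=0$, $\beta$ may be taken as $\sigma_{\min}^{2}(X)/\|XX^{T}-ZZ^{T}\|_{F}$. *)

(* Defs.v *)
From HB Require Import structures.
From mathcomp Require Import all_boot all_order all_algebra.
From mathcomp Require Import all_classical all_reals.
Set Implicit Arguments. Unset Strict Implicit. Unset Printing Implicit Defensive.
Import Order.TTheory GRing.Theory Num.Theory.
Local Open Scope ring_scope.
Local Open Scope classical_set_scope.

Definition frob (R : realType) (m n : nat) (A : 'M[R]_(m, n)) : R :=
  Num.sqrt (\sum_(i < m) \sum_(j < n) A i j ^+ 2).

(* Moore-Penrose pseudoinverse: Xd is THE pseudoinverse of X iff it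
   satisfies the four Penrose equations (these characterize it uniquely). *)
Definition is_pinv (R : realType) (n r : nat)
    (X : 'M[R]_(n, r)) (Xd : 'M[R]_(r, n)) : Prop :=
  [/\ X *m Xd *m X = X, Xd *m X *m Xd = Xd,
      (X *m Xd)^T = X *m Xd & (Xd *m X)^T = Xd *m X].

(* Square of the r-th singular value of X : 'M_(n, r): the smallest
   eigenvalue of the r x r matrix X^T X (counting zero eigenvalues). *)
Definition sigma_min_sq (R : realType) (n r : nat) (X : 'M[R]_(n, r)) : R :=
  inf [set a : R | eigenvalue (X^T *m X) a].

(* alpha and beta of the paper; Zp = Z_perp, D = XX^T - ZZ^T.
   When Z_perp = 0, beta is taken as sigma_min^2(X)/||D||_F (per context). *)
Definition alpha_of (R : realType) (n r : nat) (X Z : 'M[R]_(n, r))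
    (Zp : 'M[R]_(n, r)) : R :=
  frob (Zp *m Zp^T) / frob (X *m X^T - Z *m Z^T).

Definition beta_of (R : realType) (n r : nat) (X Z : 'M[R]_(n, r))
    (Zp : 'M[R]_(n, r)) : R :=
  if Zp == 0 then sigma_min_sq X / frob (X *m X^T - Z *m Z^T)
  else sigma_min_sq X / frob (X *m X^T - Z *m Z^T)
       * (\tr (Zp *m Zp^T) / frob (Zp *m Zp^T)).

(* Main.v *)
Require Import Defs.
From HB Require Import structures.
From mathcomp Require Import all_boot all_order all_algebra.
From mathcomp Require Import all_classical all_reals.
From mathcomp Require Import ring lra.
Import Order.TTheory GRing.Theory Num.Theory.
Local Open Scope ring_scope.
Set Implicit Arguments. Unset Strict Implicit. Unset Printing Implicit Defensive.

Section Frob.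
Variable R : realFieldType.

Definition fdot m n (A B : 'M[R]_(m, n)) : R := \tr (A *m B^T).
Definition fn2 m n (A : 'M[R]_(m, n)) : R := fdot A A.

Lemma fdotE m n (A B : 'M[R]_(m, n)) :
  fdot A B = \sum_(i < m) \sum_(j < n) A i j * B i j.
Proof.
rewrite /fdot /mxtrace; apply: eq_bigr => i _; rewrite !mxE.
by apply: eq_bigr => j _; rewrite mxE.
Qed.

Lemma fn2E m n (A : 'M[R]_(m, n)) :
  fn2 A = \sum_(i < m) \sum_(j < n) A i j ^+ 2.
Proof. by rewrite /fn2 fdotE; apply: eq_bigr => i _; apply: eq_bigr => j _; rewrite expr2. Qed.

Lemma fn2_ge0 m n (A : 'M[R]_(m, n)) : 0 <= fn2 A.
Proof. by rewrite fn2E; apply: sumr_ge0 => i _; apply: sumr_ge0 => j _; apply: sqr_ge0. Qed.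

Lemma fn2_eq0 m n (A : 'M[R]_(m, n)) : fn2 A = 0 -> A = 0.
Proof.
rewrite fn2E => /eqP; rewrite psumr_eq0; last first.
  by move=> i _; apply: sumr_ge0 => j _; apply: sqr_ge0.
move=> /allP H; apply/matrixP => i j; rewrite mxE.
have := H i (mem_index_enum i); rewrite implyTb psumr_eq0; last by move=> k _; apply: sqr_ge0.
by move=> /allP /(_ j (mem_index_enum j)); rewrite implyTb sqrf_eq0 => /eqP.
Qed.

Lemma fdotC m n (A B : 'M[R]_(m, n)) : fdot A B = fdot B A.
Proof. by rewrite /fdot -mxtrace_tr trmx_mul trmxK. Qed.

Lemma fdotDl m n (A B C : 'M[R]_(m, n)) : fdot (A + B) C = fdot A C + fdot B C.
Proof. by rewrite /fdot mulmxDl mxtraceD. Qed.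

Lemma fdotNl m n (A C : 'M[R]_(m, n)) : fdot (- A) C = - fdot A C.
Proof. by rewrite /fdot mulNmx raddfN. Qed.

Lemma fdotZl m n a (A C : 'M[R]_(m, n)) : fdot (a *: A) C = a * fdot A C.
Proof. by rewrite /fdot -scalemxAl mxtraceZ. Qed.

Lemma fdotDr m n (A B C : 'M[R]_(m, n)) : fdot C (A + B) = fdot C A + fdot C B.
Proof. by rewrite fdotC fdotDl !(fdotC C). Qed.

Lemma fdotNr m n (A C : 'M[R]_(m, n)) : fdot C (- A) = - fdot C A.
Proof. by rewrite fdotC fdotNl fdotC. Qed.

Lemma fdotZr m n a (A C : 'M[R]_(m, n)) : fdot C (a *: A) = a * fdot C A.
Proof. by rewrite fdotC fdotZl fdotC. Qed.

Lemma fn2B m n (A B : 'M[R]_(m, n)) : fn2 (A - B) = fn2 A - 2 * fdot A B + fn2 B.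
Proof. rewrite /fn2 fdotDl !fdotDr !fdotNl !fdotNr (fdotC B A); ring. Qed.

Lemma fn2Z m n a (A : 'M[R]_(m, n)) : fn2 (a *: A) = a ^+ 2 * fn2 A.
Proof. by rewrite /fn2 fdotZl fdotZr mulrA expr2. Qed.

Lemma fn2N m n (A : 'M[R]_(m, n)) : fn2 (- A) = fn2 A.
Proof. by rewrite /fn2 fdotNl fdotNr opprK. Qed.

Lemma fn2_tr m n (A : 'M[R]_(m, n)) : fn2 A^T = fn2 A.
Proof. by rewrite /fn2 /fdot trmxK mxtrace_mulC. Qed.

End Frob.

Section Proj.
Variable R : realFieldType.

Definition isproj n (P : 'M[R]_n) := P^T = P /\ P *m P = P.

Lemma isprojC n (P : 'M[R]_n) : isproj P -> isproj (1%:M - P).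
Proof.
move=> [PT PP]; split; first by rewrite raddfB /= trmx1 PT.
by rewrite mulmxBl mul1mx mulmxBr mulmx1 PP subrr subr0.
Qed.

Lemma fn2_split_l n m (P : 'M[R]_n) (A : 'M[R]_(n, m)) : isproj P ->
  fn2 A = fn2 (P *m A) + fn2 ((1%:M - P) *m A).
Proof.
move=> [PT PP]; rewrite /fn2 /fdot !trmx_mul.
have E (B : 'M[R]_n) : B^T = B -> B *m B = B -> \tr (B *m A *m (A^T *m B^T)) = \tr (B *m (A *m A^T)).
  by move=> BT BB; rewrite BT mulmxA mxtrace_mulC !mulmxA BB -mulmxA.
have [QT QQ] := isprojC (conj PT PP).
by rewrite E // E // -mxtraceD -mulmxDl addrC subrK mul1mx.
Qed.

Lemma fn2_split_r n m (P : 'M[R]_m) (A : 'M[R]_(n, m)) : isproj P ->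
  fn2 A = fn2 (A *m P) + fn2 (A *m (1%:M - P)).
Proof.
move=> [PT PP]; rewrite -fn2_tr (fn2_split_l _ (conj PT PP)) -(fn2_tr (A *m P)).
rewrite -(fn2_tr (A *m (1%:M - P))) !trmx_mul PT.
by rewrite raddfB /= trmx1 PT.
Qed.

End Proj.

Section Main.
Variable R : realFieldType.

Lemma main_ineq n r (X Z : 'M[R]_(n, r)) (P Pi : 'M[R]_n) (s lam : R) :
  isproj P -> P *m X = X -> isproj Pi -> Pi *m Z = Z -> 0 <= s -> 0 <= lam <= 1 ->
  (forall W : 'M[R]_n, s * fn2 (W *m P) <= fn2 (W *m X)) ->
  fn2 ((1%:M - P) *m (Z *m Z^T) *m (1%:M - P)) + s ^+ 2 * (\tr P - \tr Pi)
  + 2 * lam * s * \tr ((1%:M - P) *m (Z *m Z^T) *m (1%:M - P))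
  - lam ^+ 2 * fn2 ((1%:M - P) *m (Z *m Z^T) *m (1%:M - P))
  <= fn2 (X *m X^T - Z *m Z^T).
Proof.
move=> [PT PP] PX [PiT PiPi] PiZ s0 /andP[l0 l1] Hs.
have [Q [QT QQ] EQ] : exists2 Q, isproj Q & Q = 1%:M - P.
  by exists (1%:M - P) => //; apply: isprojC.
have [Pc [PcT PcPc] EPc] : exists2 Q, isproj Q & Q = 1%:M - Pi.
  by exists (1%:M - Pi) => //; apply: isprojC.
rewrite -EQ.
set ZZ := Z *m Z^T; set XX := X *m X^T.
have ZZT : ZZ^T = ZZ by rewrite /ZZ trmx_mul trmxK.
have PiZZ : Pi *m ZZ = ZZ by rewrite /ZZ mulmxA PiZ.
have ZZPi : ZZ *m Pi = ZZ by rewrite -[LHS]trmxK trmx_mul ZZT PiT PiZZ ZZT.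
have QX : Q *m X = 0 by rewrite EQ mulmxBl mul1mx PX subrr.
have PXX : P *m XX = XX by rewrite /XX mulmxA PX.
have XXT : XX^T = XX by rewrite /XX trmx_mul trmxK.
have XXP : XX *m P = XX by rewrite -[LHS]trmxK trmx_mul PT XXT PXX XXT.
have QXX : Q *m XX = 0 by rewrite /XX mulmxA QX mul0mx.
have XXQ : XX *m Q = 0 by rewrite EQ mulmxBr mulmx1 XXP subrr.
have PQ : P *m Q = 0 by rewrite EQ mulmxBr mulmx1 PP subrr.
have QP : Q *m P = 0 by rewrite EQ mulmxBl mul1mx PP subrr.
have XXE : XX = X *m X^T by [].
clearbody XX ZZ.
set M := Q *m ZZ *m Q.
set D := XX - ZZ.
have Ha : fn2 D = fn2 (XX - P *m ZZ *m P) + fn2 (P *m ZZ *m Q) + fn2 (Q *m ZZ *m P) + fn2 M.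
  rewrite (fn2_split_l D (conj PT PP)) -EQ.
  rewrite (fn2_split_r (P *m D) (conj PT PP)) (fn2_split_r (Q *m D) (conj PT PP)) -EQ.
  rewrite /D !mulmxBr !mulmxBl.
  rewrite PXX XXP QXX XXQ !mul0mx sub0r !fn2N.
  by rewrite /M ?sub0r ?fn2N !addrA.
set E1 := XX - P *m ZZ *m P.
set S := s *: (P *m Pc *m P).
have PcX : fn2 (Pc *m X) = \tr (XX *m Pc).
  by rewrite /fn2 /fdot trmx_mul PcT !mulmxA mxtrace_mulC !mulmxA PcPc -mulmxA mxtrace_mulC XXE.
have PcP : fn2 (Pc *m P) = \tr P - \tr (P *m Pi).
  by rewrite /fn2 /fdot trmx_mul PcT PT !mulmxA -(mulmxA Pc P P) PP mxtrace_mulC !mulmxA PcPc EPc mulmxBl mul1mx raddfB /= mxtrace_mulC.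
have c1 : fdot E1 S = s * (\tr (XX *m Pc) - (\tr (ZZ *m P) - \tr (ZZ *m P *m Pi *m P))).
  rewrite /E1 /S fdotZr fdotDl fdotNl /fdot !trmx_mul PT PcT.
  have -> : \tr (XX *m (P *m (Pc *m P))) = \tr (XX *m Pc).
    by rewrite !mulmxA XXP mxtrace_mulC mulmxA PXX.
  have -> : \tr (P *m ZZ *m P *m (P *m (Pc *m P))) = \tr (ZZ *m P) - \tr (ZZ *m P *m Pi *m P); last by [].
  rewrite !mulmxA -(mulmxA _ P P) PP mxtrace_mulC !mulmxA PP EPc mulmxBr mulmx1 raddfB /=.
  congr (_ - _).
    by rewrite -!mulmxA mxtrace_mulC -mulmxA PP.
  by rewrite -!mulmxA mxtrace_mulC !mulmxA.
have hS : fn2 S = s ^+ 2 * (\tr P - 2 * \tr (P *m Pi) + \tr (P *m Pi *m P *m Pi)).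
  rewrite /S fn2Z; congr (_ * _).
  rewrite /fn2 /fdot !trmx_mul PT PcT !mulmxA -(mulmxA _ P P) PP mxtrace_mulC !mulmxA PP.
  rewrite EPc !mulmxBr !mulmxBl !mulmx1 !raddfB /=.
  have t1 : \tr (P *m Pi *m P) = \tr (P *m Pi) by rewrite mxtrace_mulC mulmxA PP.
  rewrite PP t1; ring.
have hQPi : fn2 (Q *m Pi) = \tr Pi - \tr (P *m Pi).
  rewrite /fn2 /fdot !trmx_mul QT PiT !mulmxA -(mulmxA _ Pi Pi) PiPi mxtrace_mulC !mulmxA QQ.
  by rewrite EQ mulmxBl mul1mx raddfB.
have hQPiZ : fdot (Q *m Pi) (Q *m ZZ) = \tr M.
  by rewrite /fdot !trmx_mul QT ZZT !mulmxA -(mulmxA Q Pi ZZ) PiZZ.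
have hQZ : fn2 (Q *m ZZ) = fn2 (Q *m ZZ *m P) + fn2 M.
  by rewrite (fn2_split_r _ (conj PT PP)) -EQ.
have hE : fn2 (s *: (Q *m Pi) - lam *: (Q *m ZZ)) =
   s ^+ 2 * (\tr Pi - \tr (P *m Pi)) - 2 * s * lam * \tr M + lam ^+ 2 * (fn2 (Q *m ZZ *m P) + fn2 M).
  rewrite fn2B !fn2Z fdotZl fdotZr hQPi hQPiZ hQZ; ring.
have hPPiQ : fn2 (P *m Pi *m Q) = \tr (P *m Pi) - \tr (P *m Pi *m P *m Pi).
  rewrite /fn2 /fdot !trmx_mul QT PiT PT !mulmxA -(mulmxA _ Q Q) QQ mxtrace_mulC !mulmxA PP.
  by rewrite EQ !mulmxBr !mulmxBl !mulmx1 -(mulmxA P Pi Pi) PiPi raddfB /=.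
have hPf : fdot (P *m Pi *m Q) (P *m ZZ *m Q) = \tr (ZZ *m P) - \tr (ZZ *m P *m Pi *m P).
  rewrite /fdot !trmx_mul QT ZZT PT !mulmxA -(mulmxA _ Q Q) QQ.
  rewrite EQ !mulmxBr !mulmxBl !mulmx1 -(mulmxA P Pi ZZ) PiZZ raddfB /=.
  congr (_ - _).
    by rewrite mxtrace_mulC mulmxA PP mxtrace_mulC.
  by rewrite mxtrace_mulC !mulmxA PP mxtrace_mulC !mulmxA.
have hF : fn2 (s *: (P *m Pi *m Q) - P *m ZZ *m Q) =
   s ^+ 2 * (\tr (P *m Pi) - \tr (P *m Pi *m P *m Pi)) - 2 * s * (\tr (ZZ *m P) - \tr (ZZ *m P *m Pi *m P)) + fn2 (P *m ZZ *m Q).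
  by rewrite fn2B fn2Z fdotZl hPPiQ hPf mulrA.
have hT : fn2 (Q *m ZZ *m P) = fn2 (P *m ZZ *m Q).
  by rewrite -fn2_tr !trmx_mul QT PT ZZT mulmxA.
have hE1 : fn2 (E1 - S) = fn2 E1 - 2 * fdot E1 S + fn2 S by rewrite fn2B.
have HsPc := Hs Pc.
rewrite PcP PcX in HsPc.
have n1 := fn2_ge0 (E1 - S).
have n2 := fn2_ge0 (s *: (Q *m Pi) - lam *: (Q *m ZZ)).
have n3 := fn2_ge0 (s *: (P *m Pi *m Q) - P *m ZZ *m Q).
have n4 : 0 <= s * (\tr (XX *m Pc) - s * (\tr P - \tr (P *m Pi))).
  by apply: mulr_ge0 => //; rewrite subr_ge0.
have n5 : 0 <= (1 - lam ^+ 2) * fn2 (P *m ZZ *m Q).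
  apply: mulr_ge0; last exact: fn2_ge0.
  by rewrite subr_ge0 expr_le1.
rewrite Ha hT.
rewrite hE in n2; rewrite hF in n3; rewrite hE1 c1 hS in n1.
rewrite hT in n2.
rewrite /E1 in n1. lra.
Qed.
End Main.

Section Sig.
Local Open Scope classical_set_scope.
Variable R : realType.

Lemma fn2_rowX r n (v : 'rV[R]_r) (X : 'M[R]_(n, r)) :
  fn2 (v *m X^T) = fdot (v *m (X^T *m X)) v.
Proof. by rewrite /fn2 /fdot trmx_mul trmxK !mulmxA. Qed.

Lemma fn2_gt0 m n (A : 'M[R]_(m, n)) : A != 0 -> 0 < fn2 A.
Proof.
move=> A0; rewrite lt_neqAle fn2_ge0 andbT; apply/eqP => /esym /fn2_eq0 H.
by rewrite H eqxx in A0.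
Qed.

Lemma abs_entry_le r (v : 'rV[R]_r) i j : `|v 0 i * v 0 j| <= fn2 v.
Proof.
have Hk k : v 0 k ^+ 2 <= fn2 v.
  rewrite fn2E big_ord1 (bigD1 k) //= lerDl.
  by apply: sumr_ge0 => l _; apply: sqr_ge0.
have := Hk i; have := Hk j.
rewrite normrM.
have : 0 <= (`|v 0 i| - `|v 0 j|) ^+ 2 by apply: sqr_ge0.
rewrite -(real_normK (num_real (v 0 i))) -(real_normK (num_real (v 0 j))).
nra.
Qed.

Lemma quad_bound r (B : 'M[R]_r) (v : 'rV[R]_r) :
  fdot (v *m B) v <= (\sum_i \sum_j `|B i j|) * fn2 v.
Proof.
rewrite fdotE big_ord1.
apply: (le_trans (ler_norm _)); apply: (le_trans (ler_norm_sum _ _ _)).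
rewrite (exchange_big _ _ _ _ _ (fun i j => `|B i j|)) /= mulr_suml.
apply: ler_sum => j _; rewrite mxE mulr_suml [X in _ <= X]mulr_suml.
apply: (le_trans (ler_norm_sum _ _ _)); apply: ler_sum => k _.
rewrite normrM normrM mulrAC -normrM.
by rewrite mulrC; apply: ler_wpM2l => //; apply: abs_entry_le.
Qed.

Lemma sigma_facts n r (X : 'M[R]_(n, r)) : (0 < r)%N ->
  0 <= sigma_min_sq X /\ (forall v : 'rV[R]_r, sigma_min_sq X * fn2 v <= fn2 (v *m X^T)).
Proof.
move=> r0.
have qG (v : 'rV[R]_r) : fdot (v *m (X^T *m X)) v = fn2 (v *m X^T) by rewrite (fn2_rowX v X).
set K := [set x : R | exists2 v : 'rV[R]_r, v != 0 & x = fn2 (v *m X^T) / fn2 v].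
have v0n : (const_mx 1 : 'rV[R]_r) != 0.
  apply/eqP => /matrixP /(_ 0 (Ordinal r0)); rewrite !mxE => /eqP; by rewrite oner_eq0.
have Kne : K !=set0.
  by exists (fn2 ((const_mx 1 : 'rV[R]_r) *m X^T) / fn2 (const_mx 1 : 'rV[R]_r)); exists (const_mx 1).
have Klb : lbound K 0.
  move=> x [v _ ->]; apply: divr_ge0; exact: fn2_ge0.
have hasK : has_lbound K by exists 0.
set c := inf K.
have cle (v : 'rV[R]_r) : c * fn2 v <= fn2 (v *m X^T).
  have [->|vn] := eqVneq v 0.
    by rewrite /fn2 /fdot !mul0mx mxtrace0 mulr0.
  have : c <= fn2 (v *m X^T) / fn2 v by apply: ge_inf => //; exists v.
  by rewrite ler_pdivlMr // fn2_gt0.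
have c0 : 0 <= c by apply: lb_le_inf.
set G := X^T *m X.
have GT : G^T = G by rewrite /G trmx_mul trmxK.
have ceig : eigenvalue G c.
  have [//|Hn] := boolP (eigenvalue G c); exfalso.
  set A := G - c%:M.
  have Au : A \in unitmx.
    by rewrite -row_free_unit -kermx_eq0; move: Hn; rewrite /eigenvalue /eigenspace negbK.
  set Bi := invmx A.
  have AT : A^T = A by rewrite /A raddfB /= GT tr_scalar_mx.
  have BT : Bi^T = Bi by rewrite /Bi trmx_inv AT.
  have BA : Bi *m A = 1%:M by rewrite /Bi mulVmx.
  set K0 := \sum_i \sum_j `|Bi i j|.
  have K0ge : 0 <= K0 by apply: sumr_ge0 => i _; apply: sumr_ge0 => j _.
  have qA (x : 'rV[R]_r) : fdot (x *m A) x = fn2 (x *m X^T) - c * fn2 x.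
    by rewrite /A mulmxBr mul_mx_scalar fdotDl fdotNl fdotZl qG.
  set t := K0 + 1.
  have t0 : 0 < t by rewrite /t ltr_wpDl.
  have key (v : 'rV[R]_r) : v != 0 -> c + (K0 + 2) / t ^+ 2 <= fn2 (v *m X^T) / fn2 v.
    move=> vn; set w := v *m Bi.
    have N0 : 0 < fn2 v by apply: fn2_gt0.
    have wA : w *m A = v by rewrite /w -mulmxA BA mulmx1.
    have h1 : fdot (v *m A) w = fn2 v.
      by rewrite fdotC /fdot /w trmx_mul AT -!mulmxA (mulmxA Bi) BA mul1mx.
    have h2 : fdot v w = fdot (v *m Bi) v.
      by rewrite /fdot /w trmx_mul BT mulmxA.
    have h3 := quad_bound Bi v.
    have h := cle (w - t *: v); rewrite -subr_ge0 -qA in h.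
    move: h; rewrite mulmxBl -scalemxAl fdotDl !fdotDr !fdotNl !fdotNr !fdotZl !fdotZr wA h1 h2 qA -/(fn2 v).
    set q := fn2 (v *m X^T); set N := fn2 v; set a := fdot (v *m Bi) v => h.
    have qE : q = (q / N) * N by rewrite divfK // gt_eqF.
    set d := q / N; rewrite qE in h.
    have h4 : 0 <= N * (K0 - 2 * t + t ^+ 2 * (d - c)).
      have : 0 <= a - t * N + (- (t * N) - - (t * (t * (d * N - c * N)))) by [].
      move: h3; rewrite -/a -/N => h3 h5.
      have -> : N * (K0 - 2 * t + t ^+ 2 * (d - c)) = (K0 * N - a) + (a - t * N + (- (t * N) - - (t * (t * (d * N - c * N))))) by ring.
      by apply: addr_ge0; rewrite // subr_ge0.
    rewrite pmulr_rge0 // in h4.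
    rewrite -lerBrDl ler_pdivrMr ?exprn_gt0 //.
    move: h4; rewrite /t; nra.
  have : c + (K0 + 2) / t ^+ 2 <= c.
    by apply: lb_le_inf => // x [v vn ->]; apply: key.
  rewrite gerDl leNgt => /negP; apply.
  by apply: divr_gt0; [rewrite ltr_wpDl | rewrite exprn_gt0].
set E := [set a : R | eigenvalue G a].
have Elb : lbound E 0.
  move=> a /eigenvalueP [v vG vn].
  have := qG v; rewrite -/G vG fdotZl => e.
  have := fn2_ge0 (v *m X^T); rewrite -e pmulr_lge0 //; exact: fn2_gt0.
have hasE : has_lbound E by exists 0.
have sc : inf E <= c by apply: ge_inf.
have s0 : 0 <= inf E by apply: lb_le_inf => //; exists c.
rewrite /sigma_min_sq -/G -/E; split => // v.
apply: le_trans (cle v); apply: ler_wpM2r => //; exact: fn2_ge0.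
Qed.

End Sig.

Section Pinv.
Variable R : realType.

Lemma fn2_rows m n (A : 'M[R]_(m, n)) : fn2 A = \sum_i fn2 (row i A).
Proof.
rewrite fn2E; apply: eq_bigr => i _; rewrite fn2E big_ord1.
by apply: eq_bigr => j _; rewrite mxE.
Qed.

Lemma pinv_proj n r (X : 'M[R]_(n, r)) Xd : is_pinv X Xd ->
  isproj (X *m Xd) /\ X *m Xd *m X = X.
Proof.
case=> h1 h2 h3 h4; split => //; split => //.
by rewrite -mulmxA (mulmxA Xd) h2.
Qed.

Lemma Hs_lemma n r (X : 'M[R]_(n, r)) Xd s : is_pinv X Xd -> 0 <= s ->
  (forall v : 'rV_r, s * fn2 v <= fn2 (v *m X^T)) ->
  forall m (W : 'M[R]_(m, n)), s * fn2 (W *m (X *m Xd)) <= fn2 (W *m X).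
Proof.
move=> hp s0 hv m W.
have [[PT PP] PX] := pinv_proj hp.
rewrite !(fn2_rows (W *m _)) mulr_sumr; apply: ler_sum => i _.
rewrite !row_mul; set w := row i W.
set c := w *m Xd^T.
have e1 : w *m (X *m Xd) = c *m X^T by rewrite /c -mulmxA -trmx_mul PT.
have e2 : w *m X = c *m (X^T *m X) by rewrite mulmxA -e1 -mulmxA PX.
rewrite e1 e2; set g := c *m (X^T *m X).
have hg : fn2 (c *m X^T) = fdot g c by rewrite /g /fn2 /fdot trmx_mul trmxK !mulmxA.
have hgc : fdot c g = fdot g c by rewrite fdotC.
have := hv c; rewrite hg => h.
have := fn2_ge0 (g - s *: c); rewrite fn2B fdotZr fn2Z => h'.
nra.
Qed.

End Pinv.

Section ProjOf.
Variable R : realFieldType.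

Lemma proj_of m k (F : 'M[R]_(m, k)) : row_free F^T ->
  exists Pi : 'M[R]_m, [/\ isproj Pi, Pi *m F = F & \tr Pi = k%:R].
Proof.
move=> Ff.
set Gm := F^T *m F.
have GmT : Gm^T = Gm by rewrite /Gm trmx_mul trmxK.
have Gu : Gm \in unitmx.
  rewrite -row_free_unit; apply: inj_row_free => v vG.
  have h : fn2 (v *m F^T) = 0.
    by rewrite /fn2 /fdot trmx_mul trmxK !mulmxA -(mulmxA v) vG mul0mx mxtrace0.
  have := fn2_eq0 h => h2.
  by apply: (row_free_inj Ff); rewrite h2 mul0mx.
set Gi := invmx Gm.
have GiT : Gi^T = Gi by rewrite /Gi trmx_inv GmT.
have GiG : Gi *m Gm = 1%:M by rewrite /Gi mulVmx.
exists (F *m Gi *m F^T); split.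
- split; first by rewrite !trmx_mul trmxK GiT mulmxA.
  rewrite -!mulmxA; congr (F *m _); rewrite !mulmxA -(mulmxA _ F^T F) -/Gm.
  by rewrite GiG mul1mx.
- by rewrite -mulmxA -/Gm -mulmxA GiG mulmx1.
- by rewrite mxtrace_mulC mulmxA -/Gm /Gi mulmxV // mxtrace1.
Qed.

End ProjOf.

Section Arith.
Variable R : realType.

Lemma final_arith (m2 d2 s t rr rk : R) :
  0 < m2 -> 0 < d2 -> 0 <= s -> 0 <= t -> 1 <= rk -> rk <= rr -> t ^+ 2 <= rk * m2 ->
  (forall lam, 0 <= lam -> lam <= 1 ->
     m2 + s ^+ 2 * (rr - rk) + 2 * lam * s * t - lam ^+ 2 * m2 <= d2) ->
  (s / Num.sqrt d2 * (t / Num.sqrt m2) <= Num.sqrt m2 / Num.sqrt d2 ->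
     (Num.sqrt m2 / Num.sqrt d2) ^+ 2 + rr / rk * (s / Num.sqrt d2 * (t / Num.sqrt m2)) ^+ 2 <= 1)
  /\ (Num.sqrt m2 / Num.sqrt d2 <= s / Num.sqrt d2 * (t / Num.sqrt m2) ->
     Num.sqrt m2 / Num.sqrt d2 <= 1 / Num.sqrt (1 + rr / rk)).
Proof.
move=> m20 d20 s0 t0 rk1 rkr ht H.
have m0 : 0 < Num.sqrt m2 by rewrite sqrtr_gt0.
have d0 : 0 < Num.sqrt d2 by rewrite sqrtr_gt0.
have Em : m2 = Num.sqrt m2 ^+ 2 by rewrite sqr_sqrtr // ltW.
have Ed : d2 = Num.sqrt d2 ^+ 2 by rewrite sqr_sqrtr // ltW.
move: (Num.sqrt m2) (Num.sqrt d2) m0 d0 Em Ed => m d m0 d0 Em Ed.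
subst m2 d2.
have rk0 : 0 < rk by apply: lt_le_trans rk1.
set q := rr / rk.
have qE : q * rk = rr by rewrite /q divfK // gt_eqF.
have q1 : 1 <= q by rewrite /q ler_pdivlMr // mul1r.
set w := s * t / m.
have wE : w * m = s * t by rewrite /w divfK // gt_eqF.
have w0 : 0 <= w by apply: divr_ge0; [apply: mulr_ge0 | apply: ltW].
have ww : w ^+ 2 <= rk * s ^+ 2.
  have h : (w * m) ^+ 2 <= (rk * s ^+ 2) * m ^+ 2.
    rewrite wE exprMn; nra.
  rewrite exprMn in h; rewrite -(ler_pM2r (exprn_gt0 2 m0)); exact: h.
have bE : s / d * (t / m) = w / d by rewrite /w; ring.
rewrite bE; clearbody w.
split.
  rewrite ler_pM2r ?invr_gt0 // => wm.
  set lam := w / m.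
  have lE : lam * m = w by rewrite /lam divfK // gt_eqF.
  have l0 : 0 <= lam by apply: divr_ge0 => //; apply: ltW.
  have l1 : lam <= 1 by rewrite /lam ler_pdivrMr // mul1r.
  have := H lam l0 l1.
  have -> : 2 * lam * s * t = 2 * w ^+ 2.
    by transitivity (2 * lam * (s * t)); [ring | rewrite -wE -lE; ring].
  have -> : lam ^+ 2 * m ^+ 2 = w ^+ 2 by rewrite -lE; ring.
  move=> h.
  rewrite !expr_div_n mulrA -mulrDl ler_pdivrMr ?exprn_gt0 // mul1r.
  have : (q - 1) * (rk * s ^+ 2 - w ^+ 2) >= 0 by apply: mulr_ge0; rewrite subr_ge0.
  rewrite -qE in h.
  nra.
rewrite ler_pM2r ?invr_gt0 // => mw.
have := H 1 ler01 (lexx _).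
rewrite expr1n mul1r mulr1 -mulrA -wE -qE => h.
have k0 : 0 < Num.sqrt (1 + q) by rewrite sqrtr_gt0; lra.
have kE : Num.sqrt (1 + q) ^+ 2 = 1 + q by rewrite sqr_sqrtr //; lra.
move: (Num.sqrt (1 + q)) k0 kE => k k0 kE.
rewrite ler_pdivrMr // mul1r mulrC ler_pdivlMr //.
rewrite -ler_sqr ?nnegrE; last 2 first.
- by apply: mulr_ge0; apply: ltW.
- by apply: ltW.
rewrite exprMn kE.
have mm : m ^+ 2 <= rk * s ^+ 2 by apply: (le_trans _ ww); rewrite ler_sqr ?nnegrE // ltW.
have : 0 <= (q - 1) * (rk * s ^+ 2 - m ^+ 2) by apply: mulr_ge0; rewrite subr_ge0.
have : 0 <= m * (w - m) by apply: mulr_ge0; [apply: ltW | rewrite subr_ge0].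
nra.
Qed.

End Arith.

Section CS.
Variable R : realFieldType.

Lemma fdot_cs m n (A B : 'M[R]_(m, n)) : fdot A B ^+ 2 <= fn2 A * fn2 B.
Proof.
have [A0|An] := eqVneq A 0.
  by rewrite A0 /fn2 /fdot !mul0mx mxtrace0 expr0n /= mul0r.
have a0 : 0 < fn2 A.
  rewrite lt_neqAle fn2_ge0 andbT; apply/eqP => /esym /fn2_eq0 H.
  by rewrite H eqxx in An.
have := fn2_ge0 (fn2 A *: B - fdot A B *: A).
rewrite fn2B !fn2Z fdotZl fdotZr (fdotC B A) => h.
have : 0 <= fn2 A * (fn2 A * fn2 B - fdot A B ^+ 2) by move: h; rewrite /fn2; nra.
by rewrite pmulr_rge0 // subr_ge0.
Qed.

Lemma tr_cs n r (Z : 'M[R]_(n, r)) (Q : 'M[R]_n) (Pr : 'M[R]_r) :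
  isproj Q -> isproj Pr -> Z *m Pr = Z ->
  (\tr (Q *m (Z *m Z^T) *m Q)) ^+ 2 <= \tr Pr * fn2 (Q *m (Z *m Z^T) *m Q).
Proof.
move=> [QT QQ] [PrT PrPr] ZPr.
have PrZ : Pr *m Z^T = Z^T by rewrite -[LHS]trmxK trmx_mul trmxK PrT ZPr.
set K := Z^T *m Q *m Z.
have KT : K^T = K by rewrite /K !trmx_mul trmxK QT mulmxA.
have e1 : \tr (Q *m (Z *m Z^T) *m Q) = \tr K.
  by rewrite /K !mulmxA mxtrace_mulC !mulmxA QQ mxtrace_mulC mulmxA.
have e2 : fn2 (Q *m (Z *m Z^T) *m Q) = fn2 K.
  rewrite /fn2 /fdot /K !trmx_mul !trmxK QT !mulmxA.
  by rewrite -(mulmxA _ Q Q) QQ mxtrace_mulC !mulmxA QQ mxtrace_mulC !mulmxA.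
have e3 : \tr K = fdot Pr K by rewrite /fdot KT /K !mulmxA PrZ.
have e4 : fn2 Pr = \tr Pr by rewrite /fn2 /fdot PrT PrPr.
by rewrite e1 e2 e3 -e4 fdot_cs.
Qed.

End CS.

Section Fin.
Variable R : realType.

Lemma frobE m n (A : 'M[R]_(m, n)) : frob A = Num.sqrt (fn2 A).
Proof. by rewrite /frob fn2E. Qed.

Lemma rank_factor n r (Z : 'M[R]_(n, r)) :
  exists (F : 'M[R]_(n, \rank Z)) (Rb : 'M[R]_(\rank Z, r)),
    [/\ Z = F *m Rb, row_free F^T & row_free Rb].
Proof.
exists (Z *m pinvmx (row_base Z)), (row_base Z); split.
- by rewrite mulmxKpV // eq_row_base.
- rewrite -row_leq_rank mxrank_tr.
  set F := Z *m pinvmx (row_base Z).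
  have eZ : F *m row_base Z = Z by rewrite /F mulmxKpV // eq_row_base.
  have h := mxrankM_maxl F (row_base Z); rewrite eZ in h; exact: h.
- exact: row_base_free.
Qed.

Lemma trP_full n r (X : 'M[R]_(n, r)) Xd s : is_pinv X Xd -> 0 < s ->
  (forall v : 'rV_r, s * fn2 v <= fn2 (v *m X^T)) -> \tr (X *m Xd) = r%:R.
Proof.
case=> h1 h2 h3 h4 s0 hv.
have XE : X *m (Xd *m X - 1%:M) = 0 by rewrite mulmxBr mulmxA h1 mulmx1 subrr.
have E0 : (Xd *m X - 1%:M)^T = 0.
  apply/row_matrixP => i; rewrite row0.
  have e : row i (Xd *m X - 1%:M)^T *m X^T = 0 by rewrite -row_mul -trmx_mul XE trmx0 row0.
  have := hv (row i (Xd *m X - 1%:M)^T); rewrite e /fn2 /fdot mul0mx mxtrace0 => h.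
  apply: fn2_eq0; apply/eqP; rewrite eq_le fn2_ge0 andbT.
  by rewrite -(pmulr_rle0 _ s0).
have : Xd *m X = 1%:M.
  by apply/eqP; rewrite -subr_eq0 -trmx_eq0 E0.
by move=> e; rewrite mxtrace_mulC e mxtrace1.
Qed.

End Fin.

Unset Implicit Arguments. Set Strict Implicit.

Theorem lemma11 (R : realType) (n r : nat) (X Z : 'M[R]_(n, r))
    (Xd : 'M[R]_(r, n)) :
  is_pinv X Xd ->
  X *m X^T != Z *m Z^T ->
  (1 <= \rank Z)%N ->
  (\rank Z <= r)%N ->
  let Zp := (1%:M - X *m Xd) *m Z in
  let a := alpha_of X Z Zp in
  let b := beta_of X Z Zp in
  let rs := (r%:R / (\rank Z)%:R : R) in
  (b <= a -> a ^+ 2 + rs * b ^+ 2 <= 1) /\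
  (a <= b -> a <= 1 / Num.sqrt (1 + rs)).
Proof.
move=> hp hD hr1 hr2 Zp a b rs.
have r0 : (0 < r)%N by apply: leq_trans hr2.
have [s0 hv] := sigma_facts X r0.
set s := sigma_min_sq X in s0 hv *.
have [[PT PP] PX] := pinv_proj hp.
have Hs := Hs_lemma hp s0 hv.
have [F [Rb [ZE Ff Rf]]] := rank_factor Z.
have [Pi [PiP PiF trPi]] := proj_of Ff.
have PiZ : Pi *m Z = Z by rewrite ZE mulmxA PiF.
have Rf' : row_free (Rb^T)^T by rewrite trmxK.
have [Pr [[PrT PrPr] PrR trPr]] := proj_of Rf'.
have ZPr : Z *m Pr = Z.
  rewrite ZE -mulmxA; congr (F *m _).
  by rewrite -[LHS]trmxK trmx_mul PrT PrR trmxK.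
set P := X *m Xd in PT PP PX Hs *.
have [QT QQ] := isprojC (conj PT PP).
set M := (1%:M - P) *m (Z *m Z^T) *m (1%:M - P).
have ZpE : Zp *m Zp^T = M by rewrite /Zp /M trmx_mul QT !mulmxA.
have cs := tr_cs (conj QT QQ) (conj PrT PrPr) ZPr.
rewrite -/M trPr in cs.
have D0 : 0 < fn2 (X *m X^T - Z *m Z^T).
  by apply: fn2_gt0; rewrite subr_eq0.
have trPs : s ^+ 2 * (\tr P - \tr Pi) = s ^+ 2 * (r%:R - (\rank Z)%:R).
  have [->|sn] := eqVneq s 0; first by rewrite expr0n /= !mul0r.
  by rewrite trPi (trP_full hp _ hv) // lt_neqAle eq_sym sn s0.
have main lam : 0 <= lam -> lam <= 1 ->
    fn2 M + s ^+ 2 * (r%:R - (\rank Z)%:R) + 2 * lam * s * \tr M - lam ^+ 2 * fn2 M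
    <= fn2 (X *m X^T - Z *m Z^T).
  move=> l0 l1; rewrite -trPs.
  by apply: main_ineq => //; rewrite l0 l1.
rewrite /a /b /alpha_of /beta_of ZpE !frobE.
have [Zp0|Zpn] := eqVneq Zp 0.
  have M0 : M = 0 by rewrite -ZpE Zp0 mul0mx.
  rewrite M0 /fn2 /fdot mul0mx mxtrace0 sqrtr0 mul0r.
  have b0 : 0 <= s / Num.sqrt (fn2 (X *m X^T - Z *m Z^T)) by apply: divr_ge0 => //; apply: sqrtr_ge0.
  split => [h|_].
    have -> : s / Num.sqrt (fn2 (X *m X^T - Z *m Z^T)) = 0 by apply/eqP; rewrite eq_le h b0.
    by rewrite expr0n /= mulr0 addr0.
  by apply: divr_ge0 => //; apply: sqrtr_ge0.
have tM : \tr M = fn2 Zp by rewrite -ZpE.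
have m0 : 0 < fn2 M.
  apply: fn2_gt0; apply/eqP => M0.
  have : fn2 Zp = 0 by rewrite -tM M0 mxtrace0.
  by move/fn2_eq0/eqP; rewrite (negbTE Zpn).
apply: final_arith => //.
- by rewrite tM fn2_ge0.
- by rewrite ler1n.
- by rewrite ler_nat.
Qed.
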